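(* Let $A\colon X\to Y$ be a compact linear operator between separable Hilbert spaces with infinite-dimensional range, where $X=L^2(\mathcal{M})$, with singular value decomposition $Ax=\sum_{n=1}^\infty\sigma_n\langle x,v_n\rangle_X u_n$. Let $\eta\ge0$ and suppose that $$\sum_{n=1}^\infty\sigma_n^\eta\|v_n\|_{L^\infty(\mathcal{M})}^2<\infty.$$ Then $V_\eta\subseteq U$, where $$V_\eta=\Big\{y\in Y:\sum_{n=1}^\infty\frac{|\langle y,u_n\rangle_Y|^2}{\sigma_n^{2+\eta}}<\infty\Big\},\qquad U=\Big\{y\in Y:\sum_{n=1}^\infty\frac{|\langle y,u_n\rangle_Y|}{\sigma_n}\|v_n\|_{L^\infty(\mathcal{M})}<\infty\Big\}.$$ Consequently, $A^\dagger y\in L^\infty(\mathcal{M})$ for all $y\in V_\eta$.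
   Context: $\mathcal{M}$ is a measure space. The SVD consists of orthonormal systems $(u_n)$ in $Y$ and $(v_n)$ in $X$ and a non-increasing sequence $(\sigma_n)$ of positive reals with $\sigma_n\to0$. The pseudoinverse is $A^\dagger y=\sum_{n}\sigma_n^{-1}\langle y,u_n\rangle_Y v_n$ for $y$ with $\sum_n\sigma_n^{-2}|\langle y,u_n\rangle_Y|^2<\infty$. *)

(* Defs.v *)
From HB Require Import structures.
From mathcomp Require Import all_boot all_order all_algebra.
From mathcomp Require Import all_classical all_reals all_analysis.
Set Implicit Arguments. Unset Strict Implicit. Unset Printing Implicit Defensive.
Import Order.TTheory GRing.Theory Num.Theory.
Import numFieldNormedType.Exports.
Local Open Scope classical_set_scope.
Local Open Scope ring_scope.

(* [inner] is an inner product on the normed space Y inducing its norm.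
   Together with completeness of Y (a completeNormedModType) this makes Y a
   real Hilbert space. *)
Definition is_inner_product (R : realType) (Y : normedModType R)
    (inner : Y -> Y -> R) : Prop :=
  [/\ (forall x y, inner x y = inner y x),
      (forall (a : R) (x y z : Y), inner (a *: x + y) z = a * inner x z + inner y z)
    & (forall x, inner x x = `|x| ^+ 2)].

Definition separable_space (T : topologicalType) : Prop :=
  exists D : set T, countable D /\ dense D.

(* ---------- X = L^2(M) (real-valued, elements represented by functions) ---------- *)
Definition inL2 d (T : measurableType d) (R : realType)
    (mu : {measure set T -> \bar R}) (f : T -> R) : Prop :=
  f \in Lfun mu 2%:E.

Definition L2inner d (T : measurableType d) (R : realType)
    (mu : {measure set T -> \bar R}) (f g : T -> R) : R :=
  Rintegral mu setT (fun x => f x * g x).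

Definition L2norm d (T : measurableType d) (R : realType)
    (mu : {measure set T -> \bar R}) (f : T -> R) : \bar R :=
  Lnorm mu 2%:E (EFin \o f).
Definition Linfnorm d (T : measurableType d) (R : realType)
    (mu : {measure set T -> \bar R}) (f : T -> R) : \bar R :=
  Lnorm mu +oo%E (EFin \o f).

Definition inLinf d (T : measurableType d) (R : realType)
    (mu : {measure set T -> \bar R}) (f : T -> R) : Prop :=
  measurable_fun setT f /\ (Linfnorm mu f < +oo)%E.

Definition L2_separable d (T : measurableType d) (R : realType)
    (mu : {measure set T -> \bar R}) : Prop :=
  exists e : nat -> T -> R, (forall k, inL2 mu (e k)) /\
    forall f, inL2 mu f -> forall eps : R, 0 < eps ->
      exists k, (L2norm mu (f \- e k)%R < eps%:E)%E.

Definition orthonormal_L2 d (T : measurableType d) (R : realType)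
    (mu : {measure set T -> \bar R}) (v : nat -> T -> R) : Prop :=
  (forall n, inL2 mu (v n)) /\
  forall n m, L2inner mu (v n) (v m) = (n == m)%:R.

Definition orthonormal_Y (R : realType) (Y : normedModType R)
    (inner : Y -> Y -> R) (u : nat -> Y) : Prop :=
  forall n m, inner (u n) (u m) = (n == m)%:R.

Definition is_SVD d (T : measurableType d) (R : realType)
    (mu : {measure set T -> \bar R}) (Y : normedModType R)
    (inner : Y -> Y -> R) (A : (T -> R) -> Y)
    (sigma : nat -> R) (u : nat -> Y) (v : nat -> T -> R) : Prop :=
  [/\ (forall n, 0 < sigma n),
      (forall n, sigma n.+1 <= sigma n),
      sigma @ \oo --> (0 : R),
      orthonormal_Y inner u &
      (orthonormal_L2 mu v /\ forall x, inL2 mu x ->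
        (fun N => \sum_(n < N) (sigma n * L2inner mu x (v n)) *: u n)
          @ \oo --> A x)].

Definition V_eta (R : realType) (Y : normedModType R) (inner : Y -> Y -> R)
    (sigma : nat -> R) (u : nat -> Y) (eta : R) : set Y :=
  [set y | (\sum_(0 <= n <oo)
              ((`|inner y (u n)| ^+ 2 / powR (sigma n) (2 + eta))%:E)
            < +oo)%E].

Definition U_set d (T : measurableType d) (R : realType)
    (mu : {measure set T -> \bar R}) (Y : normedModType R)
    (inner : Y -> Y -> R) (sigma : nat -> R) (u : nat -> Y)
    (v : nat -> T -> R) : set Y :=
  [set y | (\sum_(0 <= n <oo)
              ((`|inner y (u n)| / sigma n)%:E * Linfnorm mu (v n))
            < +oo)%E].

Definition is_pinv d (T : measurableType d) (R : realType)
    (mu : {measure set T -> \bar R}) (Y : normedModType R)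
    (inner : Y -> Y -> R) (sigma : nat -> R) (u : nat -> Y)
    (v : nat -> T -> R) (y : Y) (f : T -> R) : Prop :=
  inL2 mu f /\
  (fun N => L2norm mu (f \- (fun x => \sum_(n < N) (sigma n)^-1 * inner y (u n) * v n x))%R)
    @ \oo --> 0%E.

(* Main.v *)
Require Import Defs.
From HB Require Import structures.
From mathcomp Require Import all_boot all_order all_algebra.
From mathcomp Require Import all_classical all_reals all_analysis.
Import Order.TTheory GRing.Theory Num.Theory.
Import numFieldNormedType.Exports.
Local Open Scope classical_set_scope.
Local Open Scope ring_scope.
From mathcomp Require Import measurable_realfun.
From mathcomp Require Import lra.
Section aux2.
Context (R : realType) (d : measure_display) (T : measurableType d)
  (mu : {measure set T -> \bar R}).
Local Open Scope ereal_scope.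

Lemma mL2sq (h : T -> R) : measurable_fun setT h ->
  measurable_fun setT (EFin \o (fun x => h x ^+ 2)%R).
Proof. by move=> mh; apply/measurable_EFinP; exact: measurable_funX. Qed.

Lemma L2sq_ae (h1 h2 : T -> R) : measurable_fun setT h1 -> measurable_fun setT h2 ->
  (\forall x \ae mu, h1 x = h2 x) ->
  \int[mu]_x (((h1 x ^+ 2)%R)%:E) = \int[mu]_x (((h2 x ^+ 2)%R)%:E).
Proof.
move=> m1 m2 ae; apply: ae_eq_integral => //; try exact: mL2sq.
by apply: filterS ae => x -> _.
Qed.
End aux2.
Section aux.
Context (R : realType) (d : measure_display) (T : measurableType d)
  (mu : {measure set T -> \bar R}).
Local Open Scope ereal_scope.

Lemma L2normE (g : T -> R) :
  L2norm mu g = (\int[mu]_x ((g x ^+ 2)%R)%:E) `^ 2^-1.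
Proof.
rewrite /L2norm unlock /=; congr (_ `^ _); apply: eq_integral => x _.
by rewrite /= powR_mulrn ?normr_ge0 // real_normK // num_real.
Qed.

Lemma inL2_meas (f : T -> R) : inL2 mu f -> measurable_fun setT f.
Proof. by rewrite /inL2 inE => /andP[]; rewrite inE. Qed.

Lemma ortho_sum (v : nat -> T -> R) (b : nat -> R) (K : nat) :
  orthonormal_L2 mu v ->
  \int[mu]_x (((\sum_(n < K) b n * v n x) ^+ 2)%R)%:E = (\sum_(n < K) b n ^+ 2)%:E.
Proof.
move=> [vL2 vo].
have ivv n m : mu.-integrable setT (EFin \o (v n \* v m)%R).
  by apply/Lfun1_integrable/Lfun2_mul_Lfun1; apply: vL2.
have ivv' n m : mu.-integrable setT (fun x => ((b n * b m)%R%:E * (v n x * v m x)%R%:E)).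
  exact: integrableZl (ivv n m).
under eq_integral => x _.
  rewrite expr2 mulr_suml.
  under eq_bigr => n _ do rewrite mulr_sumr.
  rewrite -sumEFin.
  under eq_bigr => n _ do rewrite -sumEFin.
  under eq_bigr => n _ do under eq_bigr => m _ do rewrite mulrACA EFinM.
  over.
rewrite integral_sum //=; last first.
  move=> n; apply: integrable_sum => // m; exact: ivv'.
rewrite -sumEFin; apply: eq_bigr => n _.
rewrite integral_sum //.
have H (m : 'I_K) : \int[mu]_x ((b n * b m)%R%:E * (v n x * v m x)%R%:E) = ((b n * b m) * ((n : nat) == m)%:R)%R%:E.
  rewrite (integralZl _ (ivv n m)) // -vo /L2inner /Rintegral.
  rewrite (EFinM (b n * b m)%R) fineK //; exact: integrable_fin_num (ivv n m).
under eq_bigr => m _ do rewrite H.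
rewrite sumEFin; congr EFin.
rewrite (bigD1 n) //= eqxx mulr1 big1 ?addr0 ?expr2 //.
by move=> m nm; rewrite (_ : (n == m :> nat) = false) ?mulr0 // eq_sym; exact/negbTE.
Qed.
End aux.
Section constr.
Context (R : realType) (d : measure_display) (T : measurableType d)
  (mu : {measure set T -> \bar R}).
Variables (v : nat -> T -> R) (a M : nat -> R).
Hypotheses (hv : orthonormal_L2 mu v) (hM0 : forall n, 0 <= M n)
  (hM : forall n, \forall x \ae mu, `|v n x| <= M n)
  (hb : (\sum_(0 <= n <oo) ((`|a n| * M n)%:E) < +oo)%E).

Let S N x := \sum_(n < N) a n * v n x.
Let E := \bigcap_n [set x | `|v n x| <= M n].
Let B := fine (\sum_(0 <= n <oo) ((`|a n| * M n)%:E))%E.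

Lemma mv n : measurable_fun setT (v n).
Proof. case: hv => h _; exact: inL2_meas (h n). Qed.

Lemma mE : measurable E.
Proof.
apply: bigcapT_measurable => n.
have := measurableT_comp (@measurable_realfun.normr_measurable R _) (mv n) measurableT
  (measurable_itv `]-oo, (M n)]).
rewrite setTI; congr measurable; apply/seteqP; split => x /=;
  by rewrite in_itv /=.
Qed.

Lemma aeE : \forall x \ae mu, E x.
Proof. by apply: filterS (ae_foralln hM) => x hx n _; exact: hx. Qed.

Lemma psum N : \sum_(n < N) `|a n| * M n <= B.
Proof.
have := @nneseries_lim_ge R (fun n => (`|a n| * M n)%:E) xpredT 0 N.
move=> /(_ (fun n _ _ => mulr_ge0 (normr_ge0 _) (hM0 n))).
rewrite sumEFin big_mkord => h; rewrite /B -lee_fin fineK //.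
rewrite ge0_fin_numE ?hb //; apply: nneseries_ge0 => n _ _.
by rewrite lee_fin mulr_ge0.
Qed.

Lemma mS N : measurable_fun setT (S N).
Proof.
by apply: measurable_sum => n; apply: measurable_funM => //; exact: mv.
Qed.

Lemma cvgS x : E x -> cvgn (fun N => S N x).
Proof.
move=> Ex.
have -> : (fun N => S N x) = series (fun n => a n * v n x).
  by apply/funext => N; rewrite /series /S /= big_mkord.
apply: (@normed_cvg _ R^o).
apply: (@series_le_cvg _ _ (fun n => `|a n| * M n)).
- by move=> n; exact: normr_ge0.
- by move=> n; rewrite mulr_ge0.
- by move=> n /=; rewrite normrM ler_wpM2l //; exact: Ex.
- by apply: nnseries_is_cvg => // n; rewrite mulr_ge0.
Qed.


Let g N x := \1_E x * S N x.
Let f0 x := limn (fun N => g N x).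

Lemma cvg_g x : (fun N => g N x) @ \oo --> f0 x.
Proof.
rewrite /f0; have [Ex|nEx] := pselect (E x).
- have -> : (fun N => g N x) = (fun N => S N x).
    by apply/funext => N; rewrite /g indicE mem_set // mul1r.
  exact: cvgS.
- have -> : (fun N => g N x) = (fun N => 0).
    by apply/funext => N; rewrite /g indicE memNset // mul0r.
  exact: is_cvg_cst.
Qed.

Lemma gbound N x : `|g N x| <= B.
Proof.
rewrite /g indicE; have [Ex|nEx] := pselect (E x).
- rewrite mem_set // mul1r; apply: le_trans (psum N).
  apply: le_trans (ler_norm_sum _ _ _) _; apply: ler_sum => n _.
  by rewrite normrM ler_wpM2l //; exact: Ex.
- rewrite memNset // mul0r normr0 /B fine_ge0 //; apply: nneseries_ge0 => n _ _.
  by rewrite lee_fin mulr_ge0.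
Qed.

Lemma f0bound x : `|f0 x| <= B.
Proof.
rewrite ler_norml; apply/andP; split.
- apply: limr_ge; first exact: cvg_g.
  by apply: nearW => N; have := gbound N x; rewrite ler_norml => /andP[].
- apply: limr_le; first exact: cvg_g.
  by apply: nearW => N; have := gbound N x; rewrite ler_norml => /andP[].
Qed.

Lemma mg N : measurable_fun setT (g N).
Proof. apply: measurable_funM; [exact: measurable_indic mE | exact: mS]. Qed.

Lemma mf0 : measurable_fun setT f0.
Proof. by apply: (measurable_fun_cvg mg) => x _; exact: cvg_g. Qed.

Lemma aeg N : \forall x \ae mu, g N x = S N x.
Proof.
by apply: filterS aeE => x Ex; rewrite /g indicE mem_set // mul1r.
Qed.


Hypothesis ha : (\sum_(0 <= n <oo) ((a n ^+ 2)%:E) < +oo)%E.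

Lemma diffS N K x : S (N + K) x - S N x =
  \sum_(n < N + K) (if (N <= n)%N then a n else 0) * v n x.
Proof.
rewrite /S (big_ord_widen (N + K) (fun n => a n * v n x) (leq_addr K N)).
rewrite [X in _ - X]big_mkcond -sumrB; apply: eq_bigr => n _.
by case: ltnP => _ /=; rewrite ?subrr ?mul0r ?subr0.
Qed.

Lemma sqsum N K : ((\sum_(n < N + K) (if (N <= n)%N then a n else 0) ^+ 2)%:E
   <= \sum_(N <= n <oo) ((a n ^+ 2)%:E))%E.
Proof.
apply: le_trans (nneseries_lim_ge (N + K) _); last by move=> n _ _; rewrite lee_fin sqr_ge0.
rewrite sumEFin lee_fin -(big_mkord xpredT (fun n => (if (N <= n)%N then a n else 0) ^+ 2)).
rewrite (@big_cat_nat _ _ _ N 0 (N + K)) //= ?leq_addr //.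
rewrite big_nat_cond big1 ?add0r; last first.
  by move=> n /andP[/andP[_ nN] _]; rewrite leqNgt nN expr0n.
rewrite le_eqVlt; apply/orP; left; by apply/eqP/eq_big_nat => n /andP[Nn _]; rewrite Nn.
Qed.

Lemma key N : (\int[mu]_x (((f0 x - S N x) ^+ 2)%R)%:E
   <= \sum_(N <= n <oo) ((a n ^+ 2)%:E))%E.
Proof.
rewrite (@L2sq_ae _ _ _ mu _ (fun x => f0 x - g N x)); first last.
- by apply: filterS (aeg N) => x ->.
- by apply: measurable_funB; [exact: mf0 | exact: mg].
- by apply: measurable_funB; [exact: mf0 | exact: mS].
pose h K x := (((g (N + K) x - g N x) ^+ 2)%R)%:E.
have H1 x : limn_einf (h^~ x) = (((f0 x - g N x) ^+ 2)%R)%:E.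
  apply: (cvg_limn_einf_sup _).1; apply: cvg_EFin; first exact: nearW.
  rewrite /comp /=; under eq_fun do rewrite expr2.
  have c1 : (fun K => g (N + K) x) @ \oo --> f0 x.
    have := cvg_g x; rewrite -(cvg_shiftn N); apply: cvg_trans.
    by apply: near_eq_cvg; apply: nearW => K /=; rewrite addnC.
  rewrite expr2; apply: cvgM; apply: cvgB => //; exact: cvg_cst.
have hm K : measurable_fun setT (h K).
  by apply: mL2sq; apply: measurable_funB; exact: mg.
have h0 K x : setT x -> (0 <= h K x)%E by move=> _; rewrite lee_fin sqr_ge0.
have H := @fatou _ _ _ mu setT measurableT h hm h0.
have E1 : (\int[mu]_x limn_einf (h^~ x) = \int[mu]_x (((f0 x - g N x) ^+ 2)%R)%:E)%E.
  by apply: eq_integral => x _; exact: H1.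
rewrite E1 in H; apply: le_trans H _.
rewrite limn_einf_lim; apply: lime_le; first exact: is_cvg_einfs.
apply: nearW => K; apply: le_trans (ereal_inf_lbound _) _.
  by exists K => /=.
rewrite /h (@L2sq_ae _ _ _ mu _ (fun x => S (N + K) x - S N x)); first last.
- by apply: filterS (aeE) => x Ex; rewrite /g indicE mem_set // !mul1r.
- by apply: measurable_funB; exact: mS.
- by apply: measurable_funB; exact: mg.
under eq_integral do rewrite diffS.
by rewrite (@ortho_sum _ _ _ mu v (fun n => if (N <= n)%N then a n else 0) (N + K) hv); exact: sqsum.
Qed.


Lemma L2cvg : (fun N => L2norm mu (f0 \- S N)%R) @ \oo --> 0%E.
Proof.
pose tail N := (\sum_(N <= n <oo) ((a n ^+ 2)%:E))%E.
have tge0 N : (0 <= tail N)%E.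
  by apply: nneseries_ge0 => n _ _; rewrite lee_fin sqr_ge0.
have tl : tail N @[N --> \oo] --> 0%:E.
  have := @nneseries_tail_cvg R (fun n => (a n ^+ 2)%:E) xpredT ha.
  by apply => n _; rewrite lee_fin sqr_ge0.
have /fine_cvgP [tfin tcv] := tl.
have hc : (fun N => tail N `^ 2^-1)%E @ \oo --> 0%:E.
  apply: cvg_EFin.
    by apply: filterS tfin => N tN; rewrite -(fineK tN) poweR_EFin.
  have : (fun N => Num.sqrt (fine (tail N))) @ \oo --> 0.
    rewrite -sqrtr0; exact: (continuous_cvg _ (@sqrt_continuous R 0)) tcv.
  apply: cvg_trans; apply: near_eq_cvg; apply: filterS tfin => N tN /=.
  rewrite -(fineK tN) poweR_EFin /= powR12_sqrt // fine_ge0 //.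
apply: (@squeeze_cvge _ _ _ _ (cst 0%E) _ (fun N => tail N `^ 2^-1)%E) => //;
  last exact: cvg_cst.
apply: nearW => N; rewrite Lnorm_ge0 /= L2normE.
apply: gt0_ler_poweR => //.
- by rewrite in_itv /= leey andbT integral_ge0 // => x _; rewrite lee_fin sqr_ge0.
- by rewrite in_itv /= leey andbT.
- exact: key.
Qed.

Lemma exists_f0 : exists f1 : T -> R, exists B1 : R,
  [/\ measurable_fun setT f1, (forall x, `|f1 x| <= B1), inL2 mu f1 &
      (fun N => L2norm mu (f1 \- S N)%R) @ \oo --> 0%E].
Proof.
exists f0, B; split => //; [exact: mf0 | exact: f0bound | | exact: L2cvg].
rewrite /inL2 inE; apply/andP; split; first by rewrite inE; exact: mf0.
rewrite inE /= /finite_norm.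
have -> : (EFin \o f0) = (EFin \o (f0 \- S 0)%R).
  by apply/funext => x; rewrite /= /S big_ord0 subr0.
rewrite -/(L2norm mu _) L2normE; apply: poweR_lty.
apply: le_lt_trans (key 0) _.
by apply: le_lt_trans ha; rewrite le_eqVlt eqxx.
Qed.

End constr.
Section uniq.
Context (R : realType) (d : measure_display) (T : measurableType d)
  (mu : {measure set T -> \bar R}).
Local Open Scope ereal_scope.

Lemma uniq_Linf (f0 : T -> R) (B : R) (Sx : nat -> T -> R) (f : T -> R) :
  measurable_fun setT f0 -> (forall x, `|f0 x| <= B)%R ->
  (forall N, measurable_fun setT (Sx N)) ->
  (fun N => L2norm mu (f0 \- Sx N)%R) @ \oo --> 0 ->
  inL2 mu f -> (fun N => L2norm mu (f \- Sx N)%R) @ \oo --> 0 -> inLinf mu f.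
Proof.
move=> mf0 f0B mS c0 fL2 c1.
have mf : measurable_fun setT f by exact: inL2_meas fL2.
have le N : L2norm mu (f \- f0)%R <= L2norm mu (f \- Sx N)%R + L2norm mu (f0 \- Sx N)%R.
  have -> : (f \- f0)%R = ((f \- Sx N) \+ (Sx N \- f0))%R.
    by apply/funext => x /=; rewrite addrA subrK.
  have -> : L2norm mu (f0 \- Sx N)%R = L2norm mu (Sx N \- f0)%R.
    rewrite /L2norm -oppe_Lnorm; congr Lnorm; apply/funext => x /=.
    by rewrite opprB.
  apply: minkowski_EFin.
  - exact: measurable_funB.
  - exact: measurable_funB.
  - by rewrite ler1n.
have c2 : (fun N => L2norm mu (f \- Sx N)%R + L2norm mu (f0 \- Sx N)%R) @ \oo --> 0 + 0.
  by apply: cvgeD.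
rewrite adde0 in c2.
have l0 : L2norm mu (f \- f0)%R <= 0.
  rewrite -(cvg_lim _ c2) //; apply: lime_ge; first by apply/cvg_ex; exists 0.
  exact: nearW.
have /Lnorm_eq0_eq0 : L2norm mu (f \- f0)%R = 0.
  by apply/eqP; rewrite eq_le l0 Lnorm_ge0.
move=> /(_ _ _) H.
have {H} H : (EFin \o (f \- f0)%R) = \0 %[ae mu].
  apply: H => //; apply/measurable_EFinP; exact: measurable_funB.
split => //.
rewrite /Linfnorm unlock; case: ifPn => _; last exact: ltry.
apply: (@le_lt_trans _ _ B%:E); last exact: ltry.
apply/ess_sup_inf.ess_supP; apply: filterS H => x /= /(_ I) /eqP.
rewrite eqe subr_eq0 => /eqP ->; rewrite lee_fin; exact: f0B.
Qed.
End uniq.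
Lemma amgm (R : realType) (X M t : R) : 0 < t ->
  X * M <= 2^-1 * (X^+2 / t) + 2^-1 * (t * M^+2).
Proof.
move=> t0; pose Z := X / t.
have -> : X = Z * t by rewrite /Z divfK // gt_eqF.
have -> : (Z * t)^+2 / t = Z^+2 * t by rewrite exprMn expr2 mulrA mulfK ?gt_eqF.
have := mulr_ge0 (ltW t0) (sqr_ge0 (Z - M)).
nra.
Qed.

Lemma term_le (R : realType) (w : (\bar R)^nat) n : (forall k, (0 <= w k)%E) ->
  (w n <= \sum_(0 <= k <oo) w k)%E.
Proof.
move=> w0; apply: le_trans (nneseries_lim_ge n.+1 _); last by move=> k _ _; exact: w0.
rewrite big_nat_recr //= addeC; apply: leeDl; exact: sume_ge0.
Qed.

Lemma Linf_ae (R : realType) (d : measure_display) (T : measurableType d)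
  (mu : {measure set T -> \bar R}) (f : T -> R) (M : R) :
  Linfnorm mu f = M%:E -> \forall x \ae mu, `|f x| <= M.
Proof.
rewrite /Linfnorm unlock; case: ifPn => mu0 LM.
- have := ess_sup_inf.ess_sup_ge mu (abse \o (EFin \o f)).
  by rewrite LM; apply: filterS => x /=; rewrite lee_fin.
- exists setT; split => //; apply/eqP; rewrite eq_le measure_ge0 andbT.
  by rewrite leNgt.
Qed.
Theorem lemma4p10 (R : realType) (d : measure_display) (T : measurableType d)
  (mu : {measure set T -> \bar R})
  (Y : completeNormedModType R) (inner : Y -> Y -> R)
  (A : (T -> R) -> Y) (sigma : nat -> R) (u : nat -> Y) (v : nat -> T -> R)
  (eta : R) :
  is_inner_product inner ->
  separable_space Y ->
  L2_separable mu ->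
  is_SVD mu inner A sigma u v ->
  0 <= eta ->
  (\sum_(0 <= n <oo) ((powR (sigma n) eta)%:E * (Linfnorm mu (v n) ^+ 2)) < +oo)%E ->
  V_eta inner sigma u eta `<=` U_set mu inner sigma u v /\
  (forall y, V_eta inner sigma u eta y ->
     (exists f, is_pinv mu inner sigma u v y f) /\
     (forall f, is_pinv mu inner sigma u v y f -> inLinf mu f)).
Proof.
move=> _ _ _ [sig0 sigdec _ _ [vorth _]] eta0 hsum.
pose Ln n := Linfnorm mu (v n).
have Lge0 n : (0 <= Ln n)%E by exact: Lnorm_ge0.
have tpos n : 0 < powR (sigma n) eta by exact: powR_gt0 (sig0 n).
have Bge0 n : (0 <= (powR (sigma n) eta)%:E * (Linfnorm mu (v n) ^+ 2))%E.
  by apply: mule_ge0; [rewrite lee_fin powR_ge0 | rewrite expe2 mule_ge0 //; exact: Lge0].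
have Lfin n : (Ln n < +oo)%E.
  rewrite ltNge leye_eq; apply/negP => /eqP Loo.
  have := @term_le _ _ n Bge0; rewrite -/(Ln n) Loo expe2 mulyy muleC gt0_mulye ?lte_fin //.
  by move=> /(le_lt_trans) /(_ hsum); rewrite ltxx.
pose M n := fine (Ln n).
have LM n : Ln n = (M n)%:E by rewrite /M fineK // ge0_fin_numE.
have LM' n : Linfnorm mu (v n) = (M n)%:E by exact: LM n.
have M0 n : 0 <= M n by rewrite /M fine_ge0.
have hM n : \forall x \ae mu, `|v n x| <= M n by exact: Linf_ae (LM n).
have part1 : V_eta inner sigma u eta `<=` U_set mu inner sigma u v.
  move=> y; rewrite /V_eta /U_set /= => hy.
  pose Aw n := ((`|inner y (u n)| ^+ 2 / powR (sigma n) (2 + eta))%:E)%E.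
  pose Bw n := ((powR (sigma n) eta)%:E * (Linfnorm mu (v n) ^+ 2))%E.
  have Aw0 n : (0 <= Aw n)%E.
    by rewrite lee_fin divr_ge0 ?sqr_ge0 ?powR_ge0.
  have Bw0 n : (0 <= Bw n)%E by exact: Bge0.
  have h2 : (0 <= (2^-1 : R)%:E)%E by rewrite lee_fin invr_ge0.
  apply: (@le_lt_trans _ _ (\sum_(0 <= n <oo) ((2^-1)%:E * Aw n + (2^-1)%:E * Bw n))%E).
    apply: lee_nneseries => n _.
      by move=> _; rewrite LM' -EFinM lee_fin mulr_ge0 // divr_ge0 // ltW.
    rewrite /Aw /Bw LM' -EFin_expe -!EFinM -EFinD lee_fin.
    rewrite (powRD (r := 2)); last by rewrite (gt_eqF (sig0 n)) implybT.
    rewrite powR_mulrn ?(ltW (sig0 n)) //.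
    have H := @amgm R (`|inner y (u n)| / sigma n) (M n) _ (tpos n).
    by rewrite invfM [_ ^+ 2 * (_ * _)]mulrA -expr_div_n.
  rewrite nneseriesD; last 2 first.
  - by move=> n _ _; rewrite mule_ge0.
  - by move=> n _ _; rewrite mule_ge0.
  rewrite !nneseriesZl //.
  rewrite lte_add_pinfty // lte_mul_pinfty // ?lee_fin ?invr_ge0 //.
split => // y hy.
have hU := part1 y hy.
pose a n := (sigma n)^-1 * inner y (u n).
have hb : (\sum_(0 <= n <oo) ((`|a n| * M n)%:E) < +oo)%E.
  move: hU; rewrite /U_set /=; congr (_ < _)%E; apply: eq_eseriesr => n _.
  by rewrite LM' -EFinM /a normrM normfV (gtr0_norm (sig0 n)) [_^-1 * _]mulrC.
have sle n : sigma n <= sigma 0.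
  by elim: n => // n IH; exact: le_trans (sigdec n) IH.
pose t0 := powR (sigma 0) eta.
have ha : (\sum_(0 <= n <oo) ((a n ^+ 2)%:E) < +oo)%E.
  apply: (@le_lt_trans _ _ (t0%:E * \sum_(0 <= n <oo)
      ((`|inner y (u n)| ^+ 2 / powR (sigma n) (2 + eta))%:E))%E); last first.
    by rewrite lte_mul_pinfty // lee_fin powR_ge0.
  rewrite -nneseriesZl; last by move=> n _; rewrite lee_fin divr_ge0 ?sqr_ge0 ?powR_ge0.
  apply: lee_nneseries => [n _ _|n _]; first by rewrite lee_fin sqr_ge0.
  rewrite -EFinM lee_fin (powRD (r := 2)); last by rewrite (gt_eqF (sig0 n)) implybT.
  rewrite powR_mulrn ?(ltW (sig0 n)) // /a.
  rewrite (_ : ((sigma n)^-1 * inner y (u n)) ^+ 2 = (`|inner y (u n)| ^+ 2 /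
     (sigma n ^+ 2 * powR (sigma n) eta)) * powR (sigma n) eta); last first.
    rewrite real_normK ?num_real // invfM mulrA mulfVK ?gt_eqF //.
    by rewrite exprMn exprVn mulrC.
  rewrite [t0 * _]mulrC ler_wpM2l //.
    by rewrite divr_ge0 ?sqr_ge0 // mulr_ge0 ?exprn_ge0 ?powR_ge0 ?ltW.
  by apply: ge0_ler_powR => //; rewrite ?nnegrE ltW.
have [f1 [B1 [mf1 bf1 l2f1 cf1]]] := @exists_f0 R d T mu v a M vorth M0 hM hb ha.
split.
  by exists f1; split.
move=> f [l2f cf].
have mS N : measurable_fun setT (fun x => \sum_(n < N) a n * v n x).
  apply: measurable_sum => n; apply: measurable_funM => //.
  by case: vorth => h _; exact: inL2_meas (h n).
exact: (@uniq_Linf R d T mu f1 B1 (fun N x => \sum_(n < N) a n * v n x) f mf1 bf1 mS cf1 l2f cf).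
Qed.
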